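(* For every $n\ge1$, $N=2^n$ and $i\in[1..2N]$, let $R_{N,i}$ be the $i$-th row of $\mathsf{ShiftBin}_N$ (a string of length $N(n+2)$). Then every 1D SLP deriving a string that contains $R_{N,i}$ as a substring has size at least $\min\{i,\,2N-i+1\}$.
   Context: Alphabet $\Sigma\supseteq\{0,1,\$\}$. For $N=2^n$, $\mathsf{Bin}_N$ is the $N\times(n+2)$ 2D string (array) whose $i$-th row ($i\in[1..N]$) is $\$\,b_{i-1}\,\$$, where $b_{i-1}$ is the $n$-bit binary representation of $i-1$. $\mathsf{ShiftBin}_N$ is the $2N\times N(n+2)$ array such that for each $j\in[1..N]$, the subarray formed by rows $j,\dots,j+N-1$ and columns $(j-1)(n+2)+1,\dots,j(n+2)$ equals $\mathsf{Bin}_N$, and all other entries are $0$. A 1D SLP is a triple $(\mathcal V,\mathcal S,\rho)$ with a finite set $\mathcal V$ of nonterminals, a start $\mathcal S\in\mathcal V$, and productions $\rho(X)$ each either a character of $\Sigma$ or a concatenation $YZ$ of two nonterminals, with acyclic occurrence relation; it derives the string obtained by recursively expanding $\mathcal S$. Its size is the total number of symbols (nonterminals and characters) on all right-hand sides. *)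

(* Defs.v *)
From Stdlib Require Import Relations.
From mathcomp Require Import all_boot.
Set Implicit Arguments. Unset Strict Implicit. Unset Printing Implicit Defensive.

Section Defs.
Variable Sigma : eqType.
(* the three distinguished characters 0, 1, $ of the alphabet *)
Variables (c0 c1 cd : Sigma).

(* Entry (k, l) of Bin_N, N = 2^n, 1-indexed: k in [1..N], l in [1..n+2].
   Row k is  $ b_{k-1} $  with b_{k-1} the n-bit binary representation of
   k-1, most significant bit first. *)
Definition bin_entry (n k l : nat) : Sigma :=
  if (l == 1) || (l == n.+2) then cd
  else if odd ((k - 1) %/ 2 ^ (n - (l - 1))) then c1 else c0.

(* Entry (r, c) of ShiftBin_N, 1-indexed: r in [1..2N], c in [1..N(n+2)].
   Column c lies in block j = (c-1) %/ (n+2) + 1 (columns (j-1)(n+2)+1 .. j(n+2));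
   rows j .. j+N-1 of that block hold Bin_N, everything else is 0. *)
Definition shiftbin_entry (n r c : nat) : Sigma :=
  let j := (c - 1) %/ n.+2 + 1 in
  if (j <= r) && (r <= j + 2 ^ n - 1)
  then bin_entry n (r - j + 1) (c - (j - 1) * n.+2)
  else c0.

Definition shiftbin_row (n i : nat) : seq Sigma :=
  [seq shiftbin_entry n i c | c <- iota 1 (2 ^ n * n.+2)].

Inductive rule (V : Type) : Type :=
  | RChar of Sigma
  | RPair of V & V.

Record SLP (V : finType) := { slp_start : V; slp_rho : V -> rule V }.

Definition occurs (V : finType) (G : SLP V) (X Y : V) : Prop :=
  exists Z, slp_rho G X = RPair Y Z \/ slp_rho G X = RPair Z Y.

Definition acyclic (V : finType) (G : SLP V) : Prop :=
  forall X, ~ clos_trans V (occurs G) X X.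

Inductive expands (V : finType) (G : SLP V) : V -> seq Sigma -> Prop :=
  | ExpChar X a : slp_rho G X = RChar V a -> expands G X [:: a]
  | ExpPair X Y Z u v : slp_rho G X = RPair Y Z ->
      expands G Y u -> expands G Z v -> expands G X (u ++ v).

Definition derives (V : finType) (G : SLP V) (w : seq Sigma) : Prop :=
  expands G (slp_start G) w.

Definition rule_size (V : Type) (r : rule V) : nat :=
  match r with RChar _ => 1 | RPair _ _ => 2 end.

Definition slp_size (V : finType) (G : SLP V) : nat :=
  \sum_(X : V) rule_size (slp_rho G X).
End Defs.

(* Main.v *)
Require Import Defs.
From mathcomp Require Import all_boot.
From mathcomp Require Import zify.
Set Implicit Arguments. Unset Strict Implicit. Unset Printing Implicit Defensive.

Section Aux.
Variable Sigma : eqType.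
Variable V : finType.
Variable G : SLP Sigma V.

Lemma expands_det X w1 : expands G X w1 -> forall w2, expands G X w2 -> w1 = w2.
Proof.
elim=> [Y a Ha | Y A B u v Hr Hu IHu Hv IHv] w2 H2.
- inversion H2 as [? a' Ha' | ? A B u v Hr]; subst.
  + by rewrite Ha in Ha'; case: Ha' => ->.
  + by rewrite Ha in Hr.
- inversion H2 as [? a' Ha' | ? A' B' u' v' Hr' Hu' Hv']; subst.
  + by rewrite Hr in Ha'.
  + rewrite Hr in Hr'; case: Hr' => ??; subst.
    by rewrite (IHu _ Hu') (IHv _ Hv').
Qed.

Definition crossY (Y : V) (s : seq Sigma) : Prop :=
  exists A B u v s1 s2, slp_rho G Y = RPair Sigma A B /\ expands G A u /\ expands G B v /\
    s = s1 ++ s2 /\ s1 != [::] /\ s2 != [::] /\ (exists u0, u = u0 ++ s1) /\ (exists v0, v = s2 ++ v0).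

Lemma cross X w : expands G X w -> forall p s q, w = p ++ s ++ q -> 1 < size s ->
  exists Y, crossY Y s.
Proof.
elim=> [Y a _ | Y A B u v Hr Hu IHu Hv IHv] p s q Hw Hs.
- have := congr1 size Hw; rewrite !size_cat /=; lia.
- have Hsz := congr1 size Hw; rewrite !size_cat in Hsz.
  have Ht := congr1 (take (size u)) Hw.
  have Hd := congr1 (drop (size u)) Hw.
  rewrite take_size_cat // in Ht; rewrite drop_size_cat // in Hd.
  case: (leqP (size u) (size p)) => H1.
  + apply: (IHv (drop (size u) p) s q) => //.
    rewrite {1}Hd drop_cat; case: ltnP => h //.
    have -> : size u = size p by lia.
    by rewrite subnn drop0 drop_size.
  + case: (leqP (size p + size s) (size u)) => H2.
    * apply: (IHu p s (take (size u - size p - size s) q)) => //.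
      rewrite {1}Ht take_cat; case: ltnP => h; first lia.
      rewrite take_cat; case: ltnP => h'; first lia.
      by [].

    * exists Y, A, B, u, v, (take (size u - size p) s), (drop (size u - size p) s).
      split; [by []|split; [by []|split; [by []|split; [|split; [|split; [|split]]]]]].
      - by rewrite cat_take_drop.
      - by rewrite -size_eq0 size_takel; lia.
      - by rewrite -size_eq0 size_drop; lia.
      - exists p; rewrite {1}Ht take_cat; case: ltnP => h; first lia.
        by rewrite take_cat; case: ltnP => h'; [|lia].
      - exists q; rewrite {1}Hd drop_cat; case: ltnP => h; first lia.
        by rewrite drop_cat; case: ltnP => h'; [|lia].
Qed.

Definition shaped (cd : Sigma) (s : seq Sigma) := exists x, s = cd :: x ++ [:: cd] /\ cd \notin x.

Lemma shaped_key cd s s1 s2 u v u0 v0 : shaped cd s -> s = s1 ++ s2 -> s1 != [::] -> s2 != [::] ->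
  u = u0 ++ s1 -> v = s2 ++ v0 ->
  s = cd :: rev (take (index cd (rev u)) (rev u)) ++ take (index cd v) v ++ [:: cd].
Proof.
move=> [x [Hx Hn]] Hs N1 N2 -> ->.
case: s1 Hs N1 => [//|a x1] Hs _.
case/lastP: s2 Hs N2 => [//|x2 b] Hs _.
rewrite Hx /= in Hs; case: Hs => Ha.
rewrite cats1 -rcons_cat => /rcons_inj [Ex Eb]; subst.
move: Hn; rewrite mem_cat negb_or => /andP [N1 N2].
rewrite -cats1 -(catA x2) /= index_cat (negbTE N2) /= eqxx addn0 take_size_cat //.
rewrite rev_cat rev_cons -cats1 -(catA (rev x1)) /= index_cat mem_rev (negbTE N1) /= eqxx addn0.
by rewrite take_size_cat ?size_rev // revK -catA.
Qed.

Lemma cross_inj cd Y s t : shaped cd s -> shaped cd t -> crossY Y s -> crossY Y t -> s = t.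
Proof.
move=> Ss St [A [B [u [v [s1 [s2 [Hr [Hu [Hv [Hs [N1 [N2 [[u0 Hu0] [v0 Hv0]]]]]]]]]]]]]].
move=> [A' [B' [u' [v' [t1 [t2 [Hr' [Hu' [Hv' [Ht [M1 [M2 [[u0' Hu0'] [v0' Hv0']]]]]]]]]]]]]].
rewrite Hr in Hr'; case: Hr' => ??; subst A' B'.
have Eu := expands_det Hu Hu'; have Ev := expands_det Hv Hv'; rewrite -Eu in Hu0'; rewrite -Ev in Hv0'.
by rewrite (shaped_key Ss Hs N1 N2 Hu0 Hv0) (shaped_key St Ht M1 M2 Hu0' Hv0').
Qed.

Lemma count_lemma (L : seq (seq Sigma)) (R : seq Sigma -> V -> Prop) (P : pred V) :
  uniq L -> (forall s, s \in L -> exists Y, R s Y /\ P Y) ->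
  (forall s t Y, s \in L -> t \in L -> R s Y -> R t Y -> s = t) ->
  size L <= #|P|.
Proof.
move=> UL Hex Hinj.
have [Ys [E U A _]] : exists Ys, [/\ size Ys = size L, uniq Ys, all P Ys &
    forall Y, Y \in Ys -> exists2 t, t \in L & R t Y].
  elim: L UL Hex Hinj => [|s L IH] UL Hex Hinj; first by exists [::].
  move: UL => /= /andP [sL UL].
  have [Ys [E U A H]] : exists Ys, [/\ size Ys = size L, uniq Ys, all P Ys &
    forall Y, Y \in Ys -> exists2 t, t \in L & R t Y].
    apply: IH => //.
    - by move=> t Ht; apply: Hex; rewrite inE Ht orbT.
    - by move=> a b Y Ha Hb; apply: Hinj; rewrite inE ?Ha ?Hb orbT.
  have [Y [RY PY]] := Hex s (mem_head _ _).
  exists (Y :: Ys); split => /=.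
  - by rewrite E.
  - rewrite U andbT; apply/negP => /H [t Ht Rt].
    have Est : s = t by apply: (Hinj s t Y); rewrite ?mem_head ?inE ?Ht ?orbT.
    by move: sL; rewrite Est Ht.
  - by rewrite PY A.
  - move=> Z; rewrite inE => /orP [/eqP ->|/H [t Ht Rt]].
    + by exists s; rewrite ?mem_head.
    + by exists t; rewrite // inE Ht orbT.
rewrite -E cardE; apply: uniq_leq_size => // Y HY.
by rewrite mem_enum; move/allP: A; apply.
Qed.

Definition is_pair (r : rule Sigma V) : bool := if r is RPair _ _ then true else false.

Lemma size_pairs : 2 * #|[pred Y | is_pair (slp_rho G Y)]| <= slp_size G.
Proof.
rewrite -sum1_card big_distrr /= big_mkcond /slp_size /=.
apply: leq_sum => Y _; rewrite inE.
by case: (slp_rho G Y).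
Qed.

Lemma size_pos : 1 <= slp_size G.
Proof.
rewrite /slp_size (bigD1 (slp_start G)) //=.
apply: leq_trans (leq_addr _ _).
by case: (slp_rho G (slp_start G)).
Qed.

End Aux.

Lemma bits_inj m a b : a < 2 ^ m -> b < 2 ^ m ->
  (forall e, e < m -> odd (a %/ 2 ^ e) = odd (b %/ 2 ^ e)) -> a = b.
Proof.
elim: m a b => [|m IH] a b Ha Hb H; first by rewrite expn0 in Ha Hb; lia.
have H0 := H 0 (ltn0Sn _); rewrite expn0 !divn1 in H0.
have Hh : a %/ 2 = b %/ 2.
  apply: IH.
  - by rewrite ltn_divLR // -expnSr.
  - by rewrite ltn_divLR // -expnSr.
  - by move=> e He; rewrite -!divnMA -expnS; apply: H.
by rewrite (divn_eq a 2) (divn_eq b 2) !modn2 Hh H0.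
Qed.

Section Row.
Variable Sigma : eqType.
Variables c0 c1 cd : Sigma.
Hypotheses (H01 : c0 != c1) (H0d : c0 != cd) (H1d : c1 != cd).
Variables n i : nat.

Definition blk j := map (bin_entry c0 c1 cd n (i - j + 1)) (iota 1 n.+2).

Lemma row_blk j : 1 <= j <= 2 ^ n -> j <= i -> i < j + 2 ^ n ->
  exists p q, shiftbin_row c0 c1 cd n i = p ++ blk j ++ q.
Proof.
move=> /andP [Hj1 HjN] Hji HiN.
have E : 2 ^ n * n.+2 = (j - 1) * n.+2 + (n.+2 + (2 ^ n - j) * n.+2).
  have [r Er] : exists r, 2 ^ n = j + r by exists (2 ^ n - j); lia.
  rewrite Er; have -> : j + r - j = r by lia.
  case: j Hj1 {HjN Hji HiN Er} => // k _; rewrite subn1 /= !mulnDl mulSn; lia.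
rewrite /shiftbin_row E !iotaD !map_cat.
eexists; eexists; congr (_ ++ (_ ++ _)).
rewrite addnC iotaDl -map_comp /blk; apply/eq_in_map => l; rewrite mem_iota => /andP [Hl1 Hl2].
rewrite /= /shiftbin_entry.
have -> : (j - 1) * n.+2 + l - 1 = (j - 1) * n.+2 + (l - 1) by rewrite addnBA.
rewrite divnMDl // divn_small; last by lia.
rewrite addn0 subnK //.
have -> : (j <= i) && (i <= j + 2 ^ n - 1) by apply/andP; split; lia.
by rewrite addKn.
Qed.

Lemma blk_shaped j : shaped cd (blk j).
Proof.
exists (map (bin_entry c0 c1 cd n (i - j + 1)) (iota 2 n)); split.
  rewrite /blk.
  have -> : iota 1 n.+2 = 1 :: iota 2 n ++ [:: n.+2].
    by rewrite -(addn1 n.+1) iotaD add1n addn1.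
  rewrite /= map_cat /= {1 3}/bin_entry /= eqxx.
  by [].
apply/negP => /mapP [l Hl E]; move: Hl; rewrite mem_iota => /andP [Hl1 Hl2].
move: E; rewrite /bin_entry.
have -> : (l == 1) || (l == n.+2) = false by apply/negbTE; rewrite negb_or; apply/andP; split; apply/eqP; lia.
case: ifP => _ E.
- by move: H1d; rewrite E eqxx.
- by move: H0d; rewrite E eqxx.
Qed.

Lemma blk_inj j j' : j <= i -> j' <= i -> i - j < 2 ^ n -> i - j' < 2 ^ n ->
  blk j = blk j' -> j = j'.
Proof.
move=> Hj Hj' Hn Hn' E.
suff : i - j = i - j' by lia.
apply: (bits_inj Hn Hn') => e He.
pose l := n - e + 1.
have Hnth : forall k, nth cd (blk k) (l - 1) = bin_entry c0 c1 cd n (i - k + 1) l.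
  move=> k; rewrite /blk (nth_map 0); last by rewrite size_iota; lia.
  by rewrite nth_iota; [congr bin_entry; lia | lia].
have := Hnth j; rewrite E Hnth /bin_entry.
have -> : (l == 1) || (l == n.+2) = false by apply/negbTE; rewrite negb_or; apply/andP; split; apply/eqP; lia.
have -> : n - (l - 1) = e by lia.
rewrite !addnK.
case: (odd _); case: (odd _) => // E'.
- by move: H01; rewrite E' eqxx.
- by move: H01; rewrite E' eqxx.
Qed.

End Row.
Unset Implicit Arguments.

Theorem mainTheorem6 (Sigma : eqType) (c0 c1 cd : Sigma) :
  c0 != c1 -> c0 != cd -> c1 != cd ->
  forall (n : nat), 1 <= n ->
  forall (i : nat), 1 <= i <= 2 * 2 ^ n ->
  forall (V : finType) (G : SLP Sigma V), acyclic G ->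
  forall (w : seq Sigma), derives G w ->
  (exists u v, w = u ++ shiftbin_row c0 c1 cd n i ++ v) ->
  minn i (2 * 2 ^ n - i + 1) <= slp_size G.
Proof.
move=> H01 H0d H1d n Hn i /andP [Hi1 Hi2] V G _ w Hw [u [v Ew]].
set N := 2 ^ n.
set lo := maxn 1 (i.+1 - N).
set hi := minn N i.
set L := map (blk c0 c1 cd n i) (iota lo (hi.+1 - lo)).
have Hrange : forall j, j \in iota lo (hi.+1 - lo) ->
    [/\ 1 <= j <= N, j <= i & i < j + N].
  move=> j; rewrite mem_iota => /andP [Hl Hh].
  split; try (apply/andP; split); lia.
have HL : size L <= #|[pred Y | is_pair (slp_rho G Y)]|.
  apply: (@count_lemma Sigma V L (fun s Y => crossY G Y s) (fun Y => is_pair (slp_rho G Y))).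
  - rewrite map_inj_in_uniq ?iota_uniq // => j j' Hj Hj'.
    have [_ ? ?] := Hrange j Hj; have [_ ? ?] := Hrange j' Hj'.
    apply: (blk_inj H01 H0d H1d) => //; lia.
  - move=> s /mapP [j Hj ->].
    have [Hj1 Hj2 Hj3] := Hrange j Hj.
    have [p [q Ep]] := row_blk H01 H0d H1d Hj1 Hj2 Hj3.
    have Hsz : 1 < size (blk c0 c1 cd n i j) by rewrite size_map size_iota.
    have Ew2 : w = (u ++ p) ++ blk c0 c1 cd n i j ++ (q ++ v) by rewrite Ew Ep -!catA.
    have [Y HY] := cross Hw Ew2 Hsz.
    exists Y; split => //.
    by case: HY => [A [B [? [? [? [? [Hr _]]]]]]]; rewrite /= Hr.
  - move=> s t Y /mapP [j _ ->] /mapP [j' _ ->].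
    by apply: cross_inj; apply: blk_shaped H01 H0d H1d _ _ _.
have H2 := size_pairs G.
have H1 := size_pos G.
move: HL; rewrite size_map size_iota => HL.
rewrite /lo /hi in HL.
have HN : 0 < N by rewrite expn_gt0.
lia.
Qed.
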